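(* Consider the semantic collaboration (SC) methodology described in the context. Every program that satisfies the proof obligations of SC (every class invariant is admissible, and every heap update instruction executed by the program is executed in a state satisfying its precondition) satisfies, in every reachable heap, both $$\forall o:\ o.\mathit{closed}\Rightarrow o.\mathit{inv}\qquad\text{(G1)}$$ and $$\forall o,p:\ p.\mathit{closed}\wedge o\in p.\mathit{owns}\Rightarrow o.\mathit{closed}\wedge o.\mathit{owner}=p.\qquad\text{(G2)}$$
   Context: Programs are collections of classes; every object is equipped with built-in ghost attributes $\mathit{closed}$ (Boolean), $\mathit{owner}$ (object), and sets of objects $\mathit{owns}$, $\mathit{subjects}$, $\mathit{observers}$, besides its class-specific attributes. Shorthands: $o.\mathit{open}$ means $\neg o.\mathit{closed}$; $o.\mathit{free}$ means $o.\mathit{owner}.\mathit{open}$; $o.\mathit{wrapped}$ means $o.\mathit{closed}\wedge o.\mathit{free}$. A special object $\mathit{Void}$ is always allocated and open; initially it is the only allocated object. Every class has an invariant $\mathit{inv}$ (a Boolean expression over $\mathit{Current}$, the object it is evaluated on). The read set $\mathrm{reads}(e)$ of an expression $e$ is the set of objects whose attributes $e$ reads: $\mathrm{reads}(x.a)=\{x\}$, for a call to a logical (side-effect free) function it is given by that function's read clause, and for compound expressions it is the union over subexpressions; the value of $e$ depends only on the attributes of objects in $\mathrm{reads}(e)$. Each attribute $a$ has an update guard $\mathrm{guard}(s.a := y, o)$, a Boolean expression over the updated object $s$, the new value $y$, and a generic observer $o$. For a heap $h$, $e_h$ is the value of $e$ in $h$, and $h[x.a\mapsto y]$ is $h$ with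 $x.a$ changed to $y$; $\mathsf{H}$ is the current heap. An invariant $\mathit{inv}$ is admissible iff: (A1) $\mathit{inv}\Rightarrow \mathrm{reads}(\mathit{inv})\subseteq \{\mathit{Current}\}\cup\mathit{owns}\cup\mathit{subjects}$; (A2) $\mathit{inv}\Rightarrow \forall s: s\in\mathit{subjects}\Rightarrow \mathit{Current}\in s.\mathit{observers}$; (A3) $\forall s,a,y:\ s\in\mathit{subjects}\wedge\mathit{inv}\wedge \mathrm{guard}(s.a:=y,\mathit{Current})\Rightarrow \mathit{inv}_{\mathsf{H}[s.a\mapsto y]}$; (A4) $\mathit{inv}$ does not mention the attributes $\mathit{closed}$ and $\mathit{owner}$, directly or through the definitions of logical functions it uses. Heap update instructions (each modifies only the objects/attributes mentioned in its postcondition): allocation $\mathbf{create}\ x$: precondition True; postcondition $x.\mathit{open}\wedge x.\mathit{owner}=\mathit{Void}\wedge x.\mathit{observers}=\{\}$. Unwrapping $x.\mathit{unwrap}$: precondition $x.\mathit{wrapped}$; postcondition $x.\mathit{open}$. Attribute update $x.a:=y$ for $a\neq\mathit{closed}$ (and $a\ne\mathit{owner}$): preconditions $x.\mathit{open}$ and $\forall o\in x.\mathit{observers}: o.\mathit{open}\vee\mathrm{guard}(x.a:=y,o)$; postcondition $x.a=y$. Wrapping $x.\mathit{wrap}$: preconditions $x.\mathit{open}$, $x.\mathit{inv}$, and $\forall o\in x.\mathit{owns}: o.\mathit{wrapped}$; postconditions $x.\mathit{wrapped}$ and $\forall o\in x.\mathit{owns}: o.\mathit{owner}=x$ (it first sets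 the $\mathit{owner}$ attribute of every object in $x.\mathit{owns}$ and then sets $x.\mathit{closed}$). The attributes $\mathit{closed}$ and $\mathit{owner}$ are changed only by $\mathit{wrap}$ and $\mathit{unwrap}$. Objects are never deallocated. *)

(* Defs.v *)
From Stdlib Require Import ClassicalEpsilon.

Set Implicit Arguments.

(* Sets of objects are predicates:  owns h p o  means
   o \in p.owns  (similarly for subjects / observers). *)
Record heap (Obj F V : Type) := Heap {
  alloc     : Obj -> bool;
  closed    : Obj -> bool;
  owner     : Obj -> Obj;
  owns      : Obj -> Obj -> Prop;
  subjects  : Obj -> Obj -> Prop;
  observers : Obj -> Obj -> Prop;
  fld       : Obj -> F -> V }.

Arguments Heap {Obj F V}.

(* An attribute update "a := y" for an attribute a other than closed/owner:
   the attribute together with its new value. *)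
Inductive upd (Obj F V : Type) :=
  | UOwns (S : Obj -> Prop)
  | USubjects (S : Obj -> Prop)
  | UObservers (S : Obj -> Prop)
  | UField (f : F) (v : V).

Arguments UOwns {Obj F V}.
Arguments USubjects {Obj F V}.
Arguments UObservers {Obj F V}.
Arguments UField {Obj F V}.

Definition ite_eq {Obj A : Type} (x o : Obj) (a b : A) : A :=
  if excluded_middle_informative (o = x) then a else b.


Definition is_open {Obj F V} (h : heap Obj F V) (o : Obj) : Prop := closed h o = false.
Definition is_free {Obj F V} (h : heap Obj F V) (o : Obj) : Prop := is_open h (owner h o).
Definition is_wrapped {Obj F V} (h : heap Obj F V) (o : Obj) : Prop :=
  closed h o = true /\ is_free h o.

Definition set_attr {Obj F V} (h : heap Obj F V) (x : Obj) (u : upd Obj F V) : heap Obj F V :=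
  match u with
  | UOwns T => Heap (alloc h) (closed h) (owner h)
      (fun o => ite_eq x o T (owns h o)) (subjects h) (observers h) (fld h)
  | USubjects T => Heap (alloc h) (closed h) (owner h)
      (owns h) (fun o => ite_eq x o T (subjects h o)) (observers h) (fld h)
  | UObservers T => Heap (alloc h) (closed h) (owner h)
      (owns h) (subjects h) (fun o => ite_eq x o T (observers h o)) (fld h)
  | UField f v => Heap (alloc h) (closed h) (owner h)
      (owns h) (subjects h) (observers h)
      (fun o g => if excluded_middle_informative (o = x /\ g = f) then v else fld h o g)
  end.

Definition create_heap {Obj F V} (Void : Obj) (h : heap Obj F V) (x : Obj) : heap Obj F V :=
  Heap (fun o => ite_eq x o true (alloc h o))
       (fun o => ite_eq x o false (closed h o))
       (fun o => ite_eq x o Void (owner h o))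
       (owns h) (subjects h)
       (fun o => ite_eq x o (fun _ => False) (observers h o))
       (fld h).

Definition unwrap_heap {Obj F V} (h : heap Obj F V) (x : Obj) : heap Obj F V :=
  Heap (alloc h) (fun o => ite_eq x o false (closed h o)) (owner h)
       (owns h) (subjects h) (observers h) (fld h).

Definition wrap_heap {Obj F V} (h : heap Obj F V) (x : Obj) : heap Obj F V :=
  Heap (alloc h) (fun o => ite_eq x o true (closed h o))
       (fun o => if excluded_middle_informative (owns h x o) then x else owner h o)
       (owns h) (subjects h) (observers h) (fld h).

(* One heap update instruction executed in a state satisfying its precondition.
   inv o h : o.inv in heap h;  guard h s u o : guard(s.a := y, o) evaluated in h
   (u packs the attribute a and the new value y). *)
Inductive step {Obj F V} (Void : Obj) (inv : Obj -> heap Obj F V -> Prop)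
    (guard : heap Obj F V -> Obj -> upd Obj F V -> Obj -> Prop)
    : heap Obj F V -> heap Obj F V -> Prop :=
  | step_create h x :
      alloc h x = false ->
      step Void inv guard h (create_heap Void h x)
  | step_unwrap h x :
      alloc h x = true -> is_wrapped h x ->
      step Void inv guard h (unwrap_heap h x)
  | step_update h x u :
      alloc h x = true -> is_open h x ->
      (forall o, observers h x o -> is_open h o \/ guard h x u o) ->
      step Void inv guard h (set_attr h x u)
  | step_wrap h x :
      alloc h x = true -> is_open h x -> inv x h ->
      (forall o, owns h x o -> is_wrapped h o) ->
      step Void inv guard h (wrap_heap h x).

Definition initial_heap {Obj F V} (Void : Obj) (h : heap Obj F V) : Prop :=
  (forall o, alloc h o = true <-> o = Void) /\
  (forall o, closed h o = false) /\
  (forall o, o <> Void -> forall p, ~ observers h o p).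

Inductive reachable {Obj F V} (Void : Obj) (inv : Obj -> heap Obj F V -> Prop)
    (guard : heap Obj F V -> Obj -> upd Obj F V -> Obj -> Prop)
    : heap Obj F V -> Prop :=
  | reach_init h : initial_heap Void h -> reachable Void inv guard h
  | reach_step h h' : reachable Void inv guard h -> step Void inv guard h h' ->
      reachable Void inv guard h'.

Definition same_obj {Obj F V} (h h' : heap Obj F V) (x : Obj) : Prop :=
  alloc h x = alloc h' x /\ closed h x = closed h' x /\ owner h x = owner h' x /\
  owns h x = owns h' x /\ subjects h x = subjects h' x /\
  observers h x = observers h' x /\ fld h x = fld h' x.

Definition same_but_closed_owner {Obj F V} (h h' : heap Obj F V) : Prop :=
  alloc h = alloc h' /\ owns h = owns h' /\ subjects h = subjects h' /\
  observers h = observers h' /\ fld h = fld h'.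

(* reads o h : the read set of o.inv in heap h; the value of o.inv depends only
   on the attributes of objects in the read set. *)
Definition reads_sound {Obj F V} (inv : Obj -> heap Obj F V -> Prop)
    (reads : Obj -> heap Obj F V -> Obj -> Prop) : Prop :=
  forall o h h', (forall x, reads o h x -> same_obj h h' x) -> (inv o h <-> inv o h').

Definition admissible {Obj F V} (inv : Obj -> heap Obj F V -> Prop)
    (reads : Obj -> heap Obj F V -> Obj -> Prop)
    (guard : heap Obj F V -> Obj -> upd Obj F V -> Obj -> Prop) (o : Obj) : Prop :=
  (forall h, inv o h -> forall x, reads o h x -> x = o \/ owns h o x \/ subjects h o x) /\
  (forall h, inv o h -> forall s, subjects h o s -> observers h s o) /\
  (forall h s u, subjects h o s -> inv o h -> guard h s u o -> inv o (set_attr h s u)) /\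
  (* A4 (semantically: o.inv does not depend on closed / owner) *)
  (forall h h', same_but_closed_owner h h' -> (inv o h <-> inv o h')).

(* Main.v *)
Require Import Defs.
From Stdlib Require Import Classical ClassicalEpsilon FunctionalExtensionality.

Lemma ite_neq {Obj A : Type} (x o : Obj) (a b : A) : o <> x -> ite_eq x o a b = b.
Proof. intro H; unfold ite_eq; destruct (excluded_middle_informative (o = x)); congruence. Qed.

Lemma ite_eqx {Obj A : Type} (x : Obj) (a b : A) : ite_eq x x a b = a.
Proof. unfold ite_eq; destruct (excluded_middle_informative (x = x)); congruence. Qed.

Definition Inv {Obj F V} (inv : Obj -> heap Obj F V -> Prop) (h : heap Obj F V) : Prop :=
  (forall o, closed h o = true -> inv o h) /\
  (forall o p, closed h p = true -> owns h p o -> closed h o = true /\ owner h o = p) /\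
  (forall o, alloc h o = false -> closed h o = false) /\
  (forall o, alloc h o = false -> forall p, ~ observers h o p).

Lemma set_attr_same {Obj F V} (h : heap Obj F V) x u y : y <> x -> same_obj h (set_attr h x u) y.
Proof.
  intro Hy; destruct u; simpl; unfold same_obj; simpl;
    rewrite ?ite_neq by exact Hy; repeat split; auto.
  apply functional_extensionality; intro g.
  destruct (excluded_middle_informative (y = x /\ g = f)) as [[? ?]|]; [congruence|auto].
Qed.

Lemma set_attr_closed {Obj F V} (h : heap Obj F V) x u : closed (set_attr h x u) = closed h.
Proof. destruct u; reflexivity. Qed.
Lemma set_attr_owner {Obj F V} (h : heap Obj F V) x u : owner (set_attr h x u) = owner h.
Proof. destruct u; reflexivity. Qed.
Lemma set_attr_alloc {Obj F V} (h : heap Obj F V) x u : alloc (set_attr h x u) = alloc h.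
Proof. destruct u; reflexivity. Qed.
Lemma set_attr_owns {Obj F V} (h : heap Obj F V) x u p : p <> x -> owns (set_attr h x u) p = owns h p.
Proof. intro; destruct u; simpl; rewrite ?ite_neq; auto. Qed.
Lemma set_attr_obs {Obj F V} (h : heap Obj F V) x u p : p <> x -> observers (set_attr h x u) p = observers h p.
Proof. intro; destruct u; simpl; rewrite ?ite_neq; auto. Qed.

Lemma step_inv {Obj F V} (Void : Obj) inv reads guard (h h' : heap Obj F V) :
  reads_sound inv reads -> (forall o, admissible inv reads guard o) ->
  Inv inv h -> step Void inv guard h h' -> Inv inv h'.
Proof.
  intros RS ADM [G1 [G2 [U1 U2]]] St.
  destruct St as [h x Ha | h x Ha [Hxc Hf] | h x u Ha Ho Hg | h x Ha Ho Hi Hw].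
  -
    assert (Hxo : closed h x = false) by auto.
    unfold Inv; simpl; refine (conj _ (conj _ (conj _ _))).
    + intros o Hc. destruct (classic (o = x)) as [->|Hne].
      { rewrite ite_eqx in Hc; discriminate. }
      rewrite ite_neq in Hc by auto. specialize (G1 o Hc).
      destruct (ADM o) as [A1 [A2 _]].
      apply (RS o h); auto. intros y Hr.
      destruct (classic (y = x)) as [->|Hy].
      * exfalso. destruct (A1 h G1 x Hr) as [E|[E|E]].
        -- congruence.
        -- destruct (G2 x o Hc E). congruence.
        -- exact (U2 x Ha o (A2 h G1 x E)).
      * unfold same_obj; simpl; rewrite !ite_neq by auto; repeat split; auto.
    + intros o p Hc Ho'. destruct (classic (p = x)) as [->|Hne].
      { rewrite ite_eqx in Hc; discriminate. }
      rewrite ite_neq in Hc by auto. destruct (G2 o p Hc Ho') as [C1 C2].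
      assert (o <> x) by congruence. rewrite !ite_neq by auto; split; auto.
    + intros o Hao. destruct (classic (o = x)) as [->|Hne].
      { rewrite ite_eqx; auto. }
      rewrite ite_neq in Hao by auto; rewrite ite_neq by auto; auto.
    + intros o Hao p Hop. destruct (classic (o = x)) as [->|Hne].
      { rewrite ite_eqx in Hop; auto. }
      rewrite ite_neq in Hao by auto. rewrite (ite_neq x o (fun _ => False)) in Hop by auto. exact (U2 o Hao p Hop).
  -
    assert (SB : same_but_closed_owner h (unwrap_heap h x)) by (repeat split).
    unfold Inv; simpl; refine (conj _ (conj _ (conj _ _))).
    + intros o Hc. destruct (classic (o = x)) as [->|Hne].
      { rewrite ite_eqx in Hc; discriminate. }
      rewrite ite_neq in Hc by auto. destruct (ADM o) as [_ [_ [_ A4]]].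
      apply (A4 h); auto.
    + intros o p Hc Ho'. destruct (classic (p = x)) as [->|Hne].
      { rewrite ite_eqx in Hc; discriminate. }
      rewrite ite_neq in Hc by auto. destruct (G2 o p Hc Ho') as [C1 C2].
      assert (o <> x) by (intro E; subst; unfold is_free, is_open in Hf; congruence).
      rewrite !ite_neq by auto; split; auto.
    + intros o Hao. destruct (classic (o = x)) as [->|Hne].
      { rewrite ite_eqx; auto. }
      rewrite ite_neq by auto; auto.
    + exact U2.
  -
    unfold Inv; rewrite set_attr_closed, set_attr_owner, set_attr_alloc; refine (conj _ (conj _ (conj _ _))).
    + intros o Hc. specialize (G1 o Hc). destruct (ADM o) as [A1 [A2 [A3 _]]].
      destruct (classic (subjects h o x)) as [Hs|Hs].
      * apply A3; auto. destruct (Hg o (A2 h G1 x Hs)) as [E|E]; auto.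
        unfold is_open in E; congruence.
      * apply (RS o h); auto. intros y Hr. apply set_attr_same.
        intros ->. destruct (A1 h G1 x Hr) as [E|[E|E]].
        -- subst; unfold is_open in Ho; congruence.
        -- destruct (G2 x o Hc E). unfold is_open in Ho; congruence.
        -- auto.
    + intros o p Hc. assert (p <> x) by (intro; subst; unfold is_open in Ho; congruence).
      rewrite set_attr_owns by auto. intro; apply G2; auto.
    + exact U1.
    + intros o Hao. assert (o <> x) by congruence. rewrite set_attr_obs by auto. auto.
  -
    assert (SB : same_but_closed_owner h (wrap_heap h x)) by (repeat split).
    unfold Inv; simpl; refine (conj _ (conj _ (conj _ _))).
    + intros o Hc. destruct (ADM o) as [_ [_ [_ A4]]]. apply (A4 h); auto.
      destruct (classic (o = x)) as [->|Hne]; auto.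
      rewrite ite_neq in Hc by auto; auto.
    + intros o p Hc Ho'. destruct (classic (p = x)) as [->|Hne].
      * destruct (Hw o Ho') as [C _]. split.
        -- unfold ite_eq. destruct (excluded_middle_informative (o = x)); auto.
        -- destruct (excluded_middle_informative (owns h x o)); [auto|contradiction].
      * rewrite ite_neq in Hc by auto. destruct (G2 o p Hc Ho') as [C1 C2]. split.
        -- unfold ite_eq. destruct (excluded_middle_informative (o = x)); auto.
        -- destruct (excluded_middle_informative (owns h x o)) as [Hx|]; auto.
           destruct (Hw o Hx) as [_ Hfr]. unfold is_free, is_open in Hfr. congruence.
    + intros o Hao. assert (o <> x) by congruence. rewrite ite_neq by auto; auto.
    + exact U2.
Qed.

Theorem proposition1 (Obj F V : Type) (Void : Obj)
    (inv : Obj -> heap Obj F V -> Prop)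
    (reads : Obj -> heap Obj F V -> Obj -> Prop)
    (guard : heap Obj F V -> Obj -> upd Obj F V -> Obj -> Prop) :
  reads_sound inv reads ->
  (forall o, admissible inv reads guard o) ->
  forall h, reachable Void inv guard h ->
    (forall o, closed h o = true -> inv o h) /\
    (forall o p, closed h p = true -> owns h p o ->
       closed h o = true /\ owner h o = p).
Proof.
  intros RS ADM h R.
  assert (I : Inv inv h).
  { induction R as [h [Ha [Hc Ho]] | h h' R IH St].
    - unfold Inv; refine (conj _ (conj _ (conj _ _))).
      + intros o H; rewrite Hc in H; discriminate.
      + intros o p H; rewrite Hc in H; discriminate.
      + intros o _; apply Hc.
      + intros o Hao. apply Ho. intro E. apply Ha in E. congruence.
    - eapply step_inv; eauto. }
  destruct I as [G1 [G2 _]]; auto.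
Qed.
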